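(* Let $\Omega$ be a compact subset of a Euclidean space and let $\phi$ satisfy condition (A1) below. Then for every $\mu\in M(\Omega)$, \[ \phi\big(\|\mu\|_{M(\Omega)}\big)\le\Phi(\mu)\le\|\mu\|_{M(\Omega)}. \]
   Context: $M(\Omega)$ is the space of signed Borel measures on $\Omega$ of bounded total variation, with total variation norm $\|\mu\|_{M(\Omega)}$ and total variation measure $|\mu|$. With $\operatorname{atom}(\mu)=\{\omega:\mu(\{\omega\})\ne0\}$, $\Phi(\mu)=|\mu|(\Omega\setminus\operatorname{atom}(\mu))+\sum_{\omega\in\operatorname{atom}(\mu)}\phi(|\mu|(\{\omega\}))$. Condition (A1): $\phi\colon[0,\infty)\to[0,\infty)$ is differentiable, concave, nondecreasing, $\phi(0)=0$, $\phi'(0)=1$, $\phi(z)\to+\infty$ as $z\to\infty$, and there is $\gamma\ge0$ with $0\le\phi'(z_1)-\phi'(z_2)\le\gamma(z_2-z_1)$ for all $0\le z_1\le z_2$. *)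

(* Defs.v *)
From mathcomp Require Import all_boot all_algebra.
From mathcomp Require Import all_classical all_reals all_analysis.
Import numFieldNormedType.Exports.
Import GRing.Theory Num.Theory.

Set Implicit Arguments.
Unset Strict Implicit.
Unset Printing Implicit Defensive.

Local Open Scope classical_set_scope.
Local Open Scope ring_scope.

Notation borelRn R n := (g_sigma_algebraType (@open 'rV[R]_n)).

Section defs.
Context {R : realType} {n : nat}.
Local Notation T := (borelRn R n).

Definition total_variation (mu : set T -> \bar R) (A : set T) : \bar R :=
  ereal_sup [set x | exists (k : nat) (F : 'I_k -> set T),
    [/\ (forall i, measurable (F i)),
        (forall i, F i `<=` A),
        (forall i j, i != j -> F i `&` F j = set0) &
        x = (\sum_(i < k) `| mu (F i) |)%E]].

Definition TVnorm (Omega : set T) (mu : set T -> \bar R) : \bar R :=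
  total_variation mu Omega.

Definition atoms (mu : set T -> \bar R) : set T :=
  [set w | mu [set w] != 0%E].

Definition Phi (phi : R -> R) (Omega : set T) (mu : set T -> \bar R) : \bar R :=
  (total_variation mu (Omega `\` atoms mu) +
   \esum_(w in atoms mu) (phi (fine (total_variation mu [set w])))%:E)%E.

End defs.

(* Condition (A1), for phi : [0,oo) -> [0,oo) (values of phi on negative
   reals are irrelevant) with derivative dphi on [0,oo) (right derivative
   at 0). *)
Definition condA1 {R : realType} (phi dphi : R -> R) : Prop :=
  (forall z, 0 <= z -> 0 <= phi z) /\
      (forall z : R, 0 < z -> is_derive z 1 phi (dphi z)) /\
      (h^-1 * (phi h - phi 0) @[h --> 0^'+] --> dphi 0) /\
      (forall x y t, 0 <= x -> 0 <= y -> 0 <= t <= 1 ->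
         t * phi x + (1 - t) * phi y <= phi (t * x + (1 - t) * y)) /\
      (forall x y, 0 <= x -> x <= y -> phi x <= phi y) /\
      (phi 0 = 0 /\ dphi 0 = 1) /\
      (phi z @[z --> +oo] --> +oo) /\ (
      exists2 gamma : R, 0 <= gamma &
        forall z1 z2, 0 <= z1 -> z1 <= z2 ->
          0 <= dphi z1 - dphi z2 <= gamma * (z2 - z1)).

(* Main.v *)
Require Import Defs.
From mathcomp Require Import all_boot all_algebra.
From mathcomp Require Import all_classical all_reals all_analysis.
From mathcomp Require Import ring lra.
Import numFieldNormedType.Exports.
Import order.Order.TTheory GRing.Theory Num.Theory.
Local Open Scope classical_set_scope.
Local Open Scope ring_scope.

Section phi.
Context {R : realType} (phi dphi : R -> R) (hA1 : condA1 phi dphi).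

Lemma phi0 : phi 0 = 0.
Proof. by case: hA1 => _ [_ [_ [_ [_ [[-> _] _]]]]]. Qed.

Lemma phi_ge0 z : 0 <= z -> 0 <= phi z.
Proof. by case: hA1 => + _; apply. Qed.

Lemma phi_mono x y : 0 <= x -> x <= y -> phi x <= phi y.
Proof. by case: hA1 => _ [_ [_ [_ [+ _]]]]; apply. Qed.

Lemma phi_conc x y t : 0 <= x -> 0 <= y -> 0 <= t <= 1 ->
  t * phi x + (1 - t) * phi y <= phi (t * x + (1 - t) * y).
Proof. by case: hA1 => _ [_ [_ [+ _]]]; apply. Qed.

Lemma phi_scale z t : 0 <= z -> 0 <= t <= 1 -> t * phi z <= phi (t * z).
Proof.
move=> z0 t01; have := @phi_conc z 0 t z0 (lexx 0) t01.
by rewrite phi0 !mulr0 !addr0.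
Qed.

Lemma phi_le z : 0 <= z -> phi z <= z.
Proof.
rewrite le_eqVlt => /predU1P[<-|z0]; first by rewrite phi0.
have dcvg : h^-1 * (phi h - phi 0) @[h --> 0^'+] --> dphi 0.
  by case: hA1 => _ [_ [+ _]].
have d1 : dphi 0 = 1 by case: hA1 => _ [_ [_ [_ [_ [[_ ->] _]]]]].
rewrite d1 in dcvg.
suff : phi z / z <= 1 by rewrite ler_pdivrMr // mul1r.
apply: (cvgr_to_ge dcvg).
near=> h.
have h0 : 0 < h by near: h; exact: nbhs_right_gt.
have hz : h <= z by near: h; apply: nbhs_right_le.
rewrite phi0 subr0.
have t01 : 0 <= h / z <= 1.
  by apply/andP; split; [rewrite divr_ge0 ?ltW | rewrite ler_pdivrMr // mul1r].
have := @phi_scale z (h / z) (ltW z0) t01; rewrite divfK ?gt_eqF // => H.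
have -> : phi z / z = h^-1 * (h / z * phi z).
  by field; rewrite !gt_eqF.
by rewrite ler_wpM2l // invr_ge0 ltW.
Unshelve. all: by end_near.
Qed.

Lemma phi_subadd u v : 0 <= u -> 0 <= v -> phi (u + v) <= phi u + phi v.
Proof.
move=> u0 v0; have [uv0|uv0] := eqVneq (u + v) 0.
  have u00 : u = 0 by lra.
  have v00 : v = 0 by lra.
  by rewrite u00 v00 addr0 phi0 addr0.
have s0 : 0 < u + v by rewrite lt_def uv0 addr_ge0.
have tu : 0 <= u / (u + v) <= 1.
  by rewrite divr_ge0 ?addr_ge0 //= ler_pdivrMr // mul1r lerDl.
have tv : 0 <= v / (u + v) <= 1.
  by rewrite divr_ge0 ?addr_ge0 //= ler_pdivrMr // mul1r lerDr.
have := @phi_scale (u+v) _ (ltW s0) tu; rewrite divfK ?gt_eqF // => Hu.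
have := @phi_scale (u+v) _ (ltW s0) tv; rewrite divfK ?gt_eqF // => Hv.
have := lerD Hu Hv; rewrite -mulrDl -mulrDl divff ?gt_eqF // mul1r.
done.
Qed.

Lemma phi_cont z : 0 < z -> {for z, continuous phi}.
Proof.
move=> z0; have hd : is_derive z 1 phi (dphi z) by case: hA1 => _ [+ _]; apply.
apply: differentiable_continuous; apply/derivable1_diffP.
exact: ex_derive.
Qed.

Lemma phi_sum (I : Type) (s : seq I) (b : I -> R) u : 0 <= u ->
  (forall i, 0 <= b i) ->
  phi (u + \sum_(i <- s) b i) <= u + \sum_(i <- s) phi (b i).
Proof.
move=> u0 b0; elim: s => [|w s IH].
  by rewrite !big_nil !addr0; apply: phi_le.
rewrite !big_cons addrCA (addrCA u).
apply: le_trans; first apply: phi_subadd => //.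
  by apply: addr_ge0 => //; apply: sumr_ge0.
by rewrite lerD2l.
Qed.

End phi.
Section tv.
Context {R : realType} {n : nat}.
Local Notation T := (borelRn R n).
Variable mu : {charge set T -> \bar R}.
Variables (P N : set T) (nuPN : hahn_decomposition mu P N).
Local Notation nu := (charge_variation nuPN).
Local Notation TV := (Defs.total_variation mu).
Local Open Scope ereal_scope.

Lemma meas1 (t : T) : measurable [set t].
Proof.
rewrite -[X in measurable X]setCK; apply: measurableC.
apply: sub_sigma_algebra; rewrite openC.
apply: accessible_closed_set1; apply: hausdorff_accessible.
exact: norm_hausdorff.
Qed.

Lemma TV_ub k (F : 'I_k -> set T) A : (forall i, measurable (F i)) ->
  (forall i, F i `<=` A) -> (forall i j, i != j -> F i `&` F j = set0) ->
  \sum_(i < k) `| mu (F i) | <= TV A.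
Proof. by move=> mF FA dF; apply: ereal_sup_ubound; exists k, F; split. Qed.

Lemma TV_ge0 A : 0 <= TV A.
Proof.
have := @TV_ub 0 (fun _ => set0) A.
by rewrite big_ord0; apply => //; case.
Qed.

Lemma TV_mono A B : A `<=` B -> TV A <= TV B.
Proof.
move=> AB; apply: ereal_sup_le => x [k [F [mF FA dF ->]]].
by exists k, F; split => // i; apply: subset_trans (FA i) AB.
Qed.

Lemma nu_sum_le k (F : 'I_k -> set T) B : measurable B ->
  (forall i, measurable (F i)) ->
  (forall i, F i `<=` B) -> (forall i j, i != j -> F i `&` F j = set0) ->
  \sum_(i < k) nu (F i) <= nu B.
Proof.
move=> mB mF FB dF.
rewrite -(@measure_bigsetU_ord _ _ _ nu k xpredT) //; last first.
  move=> i j _ _ [x [Fi Fj]]; apply/eqP/negPn/negP => /dF.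
  by move=> /(congr1 (fun S => S x)); rewrite /= propeqE => -[] + _; apply.
apply: le_measure; rewrite ?inE //.
  by apply: bigsetU_measurable => i _.
by move=> x; rewrite -bigcup_seq_cond => -[i _]; apply: FB.
Qed.

Lemma TV_le_nu A B : measurable B -> A `<=` B -> TV A <= nu B.
Proof.
move=> mB AB; apply: ge_ereal_sup => x [k [F [mF FA dF ->]]].
apply: (le_trans _ (@nu_sum_le k F B mB mF _ dF)).
  by apply: lee_sum => i _; exact: abse_charge_variation.
by move=> i; apply: subset_trans (FA i) AB.
Qed.

Lemma TV_fin A : TV A \is a fin_num.
Proof.
rewrite ge0_fin_numE ?TV_ge0 //.
apply: (le_lt_trans (@TV_le_nu A setT measurableT (@subsetT _ A))).
by rewrite ltey_eq fin_num_measure.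
Qed.

Lemma fam_fin k (F : 'I_k -> set T) : (forall i, measurable (F i)) ->
  \sum_(i < k) `| mu (F i) | \is a fin_num.
Proof.
move=> mF; apply/sum_fin_numP => i _ _; rewrite abse_fin_num.
exact: fin_num_measure.
Qed.

Lemma TV_supadd A B : A `&` B = set0 -> TV A + TV B <= TV (A `|` B).
Proof.
move=> AB; rewrite addeC -leeBrDl ?TV_fin //.
apply: ge_ereal_sup => y [l [G [mG GB dG ->]]].
rewrite leeBrDl ?TV_fin // addeC -leeBrDl ?fam_fin //.
apply: ge_ereal_sup => x [k [F [mF FA dF ->]]].
rewrite leeBrDl ?fam_fin //.
pose H (i : 'I_(l + k)) : set T :=
  match fintype.split i with inl a => G a | inr b => F b end.
have HL i : H (lshift k i) = G i.
  by rewrite /H -[lshift k i]/(unsplit (inl i : 'I_l + 'I_k)) unsplitK.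
have HR i : H (rshift l i) = F i.
  by rewrite /H -[rshift l i]/(unsplit (inr i : 'I_l + 'I_k)) unsplitK.
have -> : \sum_(i < l) `| mu (G i) | + \sum_(i < k) `| mu (F i) | =
    \sum_(i < l + k) `| mu (H i) |.
  rewrite big_split_ord; congr (_ + _); apply: eq_bigr => i _.
    by rewrite HL.
  by rewrite HR.
apply: TV_ub.
- by move=> i; rewrite /H; case: (fintype.split i).
- move=> i; rewrite /H; case: (fintype.split i) => a z /=.
    by move=> /GB; left.
  by move=> /FA; right.
- move=> i j ij.
  have : fintype.split i != fintype.split j.
    apply: contra ij => /eqP e; apply/eqP.
    by rewrite -(splitK i) -(splitK j) e.
  rewrite /H; case: (fintype.split i) => a; case: (fintype.split j) => b /= ab.
  + by apply: dG.
  + rewrite -subset0 => z [Gz Fz].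
    have : (A `&` B) z by split; [apply: GB Gz | apply: FA Fz].
    by rewrite AB.
  + rewrite -subset0 => z [Fz Gz].
    have : (A `&` B) z by split; [apply: GB Gz | apply: FA Fz].
    by rewrite AB.
  + by apply: dF.
Qed.

Lemma TV_supadd_seq (s : seq T) B : uniq s -> B `&` [set` s] = set0 ->
  TV B + \sum_(w <- s) TV [set w] <= TV (B `|` [set` s]).
Proof.
elim: s B => [|w s IH] B.
  by move=> _ _; rewrite big_nil adde0; apply: TV_mono => x Bx; left.
rewrite cons_uniq => /andP[ws us] dB.
have dBw : B `&` [set w] = set0.
  rewrite -subset0 => x [Bx /= xw].
  have : (B `&` [set` w :: s]) x by split => //=; rewrite xw mem_head.
  by rewrite dB.
have dBws : (B `|` [set w]) `&` [set` s] = set0.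
  rewrite -subset0 => x [[Bx|/= xw] /= xs].
    have : (B `&` [set` w :: s]) x by split => //=; rewrite in_cons xs orbT.
    by rewrite dB.
  by move: ws; rewrite -xw xs.
rewrite big_cons addeA.
apply: le_trans; first by apply: leeD2r; exact: (TV_supadd _ _ dBw).
apply: le_trans; first exact: (IH _ us dBws).
apply: TV_mono => x [[Bx|/= xw]|/= xs]; [by left|right|right] => /=.
  by rewrite xw mem_head.
by rewrite in_cons xs orbT.
Qed.

Lemma upper_bound (Omega : set T) (phi dphi : R -> R) :
  condA1 phi dphi -> atoms mu `<=` Omega ->
  Phi phi Omega mu <= TV Omega.
Proof.
move=> hA1 AO; rewrite /Phi.
rewrite -leeBrDl ?TV_fin //.
apply: ge_ereal_sup => _ [X [finX XA] <-].
have [s0 X0] := (finite_seqP X).1 finX.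
have us : uniq (undup s0) := undup_uniq s0.
have -> : X = [set` undup s0].
  by rewrite X0; apply/seteqP; split => x /=; rewrite mem_undup.
rewrite -fsbig_seq // leeBrDl ?TV_fin //.
apply: (@le_trans _ _ (TV (Omega `\` atoms mu) + \sum_(w <- undup s0) TV [set w])).
  apply: leeD2l; apply: lee_sum => w _.
  rewrite -[X in _ <= X](fineK (TV_fin [set w])) lee_fin.
  apply: (@phi_le _ phi dphi hA1); apply: fine_ge0; exact: TV_ge0.
apply: le_trans; first apply: TV_supadd_seq => //.
  rewrite -subset0 => x [[_ nAx] /= xs]; apply: nAx; apply: XA.
  by rewrite X0 /= -mem_undup.
apply: TV_mono => x [[Ox _]|/= xs] //; apply: AO; apply: XA.
by rewrite X0 /= -mem_undup.
Qed.

Lemma meas_seq (s : seq T) : measurable [set` s].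
Proof.
elim: s => [|w s IH].
  by have -> : [set` [::]] = @set0 T by apply/seteqP; split => x.
have -> : [set` w :: s] = [set w] `|` [set` s].
  apply/seteqP; split => x /=; rewrite in_cons.
    by case/orP => [/eqP ->|xs]; [left|right].
  by case => [->|->]; rewrite ?eqxx ?orbT.
exact: measurableU (meas1 w) IH.
Qed.

Lemma charge_seq (nu0 : {charge set T -> \bar R}) C (s : seq T) :
  measurable C -> uniq s ->
  nu0 (C `&` [set` s]) = \sum_(w <- s) nu0 (C `&` [set w]).
Proof.
move=> mC; elim: s => [|w s IH].
  move=> _; rewrite big_nil.
  have -> : C `&` [set` [::]] = set0 by rewrite -subset0 => x [_ //].
  by rewrite charge0.
rewrite cons_uniq => /andP[ws us]; rewrite big_cons -IH //.
have -> : C `&` [set` w :: s] = (C `&` [set w]) `|` (C `&` [set` s]).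
  apply/seteqP; split => x /=.
    by move=> [Cx]; rewrite in_cons => /orP[/eqP xw|xs]; [left|right].
  by case => -[Cx] xw; split => //; rewrite in_cons ?xw ?eqxx ?xw ?orbT.
rewrite chargeU //.
- exact: measurableI (meas1 w).
- exact: measurableI (meas_seq s).
- rewrite -subset0 => x [[_ /= xw] [_ /= xs]].
  by move: ws; rewrite -xw xs.
Qed.

Lemma sum_cst (s : seq T) (c : R) :
  \sum_(w <- s) c%:E = ((size s)%:R * c)%:E.
Proof.
elim: s => [|w s IH]; first by rewrite big_nil mul0r.
by rewrite big_cons IH /= -EFinD -natr1 mulrDl mul1r addrC.
Qed.

Definition Sm (m : nat) : set T :=
  [set w | ((m.+1%:R)^-1)%R%:E < `| mu [set w] |].

Lemma Sm_sub m : Sm m `<=` atoms mu.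
Proof.
move=> w; rewrite /Sm /atoms /= => h; apply/negP => /eqP h0.
move: h; rewrite h0 abse0 lte_fin ltNge => /negP; apply.
by rewrite invr_ge0 ler0n.
Qed.

Lemma Sm_mono m m' : (m <= m')%N -> Sm m `<=` Sm m'.
Proof.
move=> mm w; rewrite /Sm /=; apply: le_lt_trans.
by rewrite lee_fin lef_pV2 ?ler_nat ?posrE ?ltr0n.
Qed.

Lemma atoms_cup : atoms mu = \bigcup_m Sm m.
Proof.
apply/seteqP; split; last by move=> w [m _]; apply: Sm_sub.
move=> w; rewrite /atoms /= => h.
have fw : `| mu [set w] | \is a fin_num.
  by rewrite abse_fin_num; apply: fin_num_measure; exact: meas1.
set r := fine `| mu [set w] |.
have r0 : (0 < r)%R.
  rewrite /r fine_gt0 //; rewrite -ge0_fin_numE ?abse_ge0 // fw andbT.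
  by rewrite lt_def abse_ge0 andbT abse_eq0.
exists (Num.Def.trunc r^-1) => //; rewrite /Sm /=.
rewrite -(fineK fw) lte_fin -/r invf_plt ?posrE ?ltr0n //.
exact: truncnS_gt.
Qed.

Lemma Sm_fin m : finite_set (Sm m).
Proof.
apply: contrapT => inf.
set c := fine (nu setT).
have [B BS cardB] := infinite_set_fset (m.+1 * (Num.Def.trunc c).+1)%N inf.
set s := finmap.enum_fset B.
have us : uniq s := finmap.fset_uniq B.
have h1 : \sum_(w <- s) nu [set w] <= nu setT.
  have := charge_seq nu setT s measurableT us.
  under eq_bigr do rewrite setTI.
  rewrite setTI => <-; apply: le_measure; rewrite ?inE //.
  exact: meas_seq.
have h2 : \sum_(w <- s) ((m.+1%:R)^-1)%R%:E <=
          \sum_(w <- s) nu [set w].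
  rewrite big_seq [X in _ <= X]big_seq; apply: lee_sum => w wB.
  apply: le_trans (ltW (BS w wB)) (abse_charge_variation _ (meas1 w)).
have := le_trans h2 h1; rewrite sum_cst -(@fineK _ (nu setT)); last first.
  exact: fin_num_measure.
rewrite lee_fin -/c; apply/negP; rewrite -ltNge.
have c0 : (0 <= c)%R by apply: fine_ge0; exact: measure_ge0.
apply: (lt_le_trans (truncnS_gt c)).
rewrite ler_pdivlMr ?ltr0n // -natrM ler_nat mulnC.
by [].
Qed.

Lemma Sm_meas m : measurable (Sm m).
Proof. exact: countable_measurable meas1 (finite_set_countable (Sm_fin m)). Qed.

Lemma atoms_meas : measurable (atoms mu).
Proof. by rewrite atoms_cup; apply: bigcupT_measurable => m; exact: Sm_meas. Qed.

Lemma eps_Sm (e : R) : (0 < e)%R ->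
  exists m, (fine (nu (atoms mu `\` Sm m)) < e)%R.
Proof.
move=> e0.
pose F m := atoms mu `\` Sm m.
have mF i : measurable (F i).
  by apply: measurableD; [exact: atoms_meas | exact: Sm_meas].
have F0 : nu (F 0%N) < +oo by rewrite ltey_eq fin_num_measure.
have cap0 : \bigcap_m F m = set0.
  rewrite -subset0 => x hx.
  have := hx 0%N I => -[Ax _].
  move: Ax; rewrite atoms_cup => -[m _ Smx].
  by have := hx m I => -[_].
have ni : {homo F : a b / (a <= b)%N >-> preorder.Order.le b a}.
  move=> a b ab; rewrite subsetEset /F => x [Ax nSx]; split => //.
  by move=> /(Sm_mono _ _ ab).
have mcap : measurable (\bigcap_m F m) by rewrite cap0.
have := @nonincreasing_cvg_mu _ _ _ nu F F0 mF mcap ni.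
rewrite cap0 measure0.
move=> /fine_cvgP[_ hc].
have [M _ HM] := cvgr_lt _ hc e e0.
by exists M; have := HM M (leqnn M).
Qed.

Lemma fam_bound (Omega : set T) (s : seq T) k (F : 'I_k -> set T) :
  uniq s -> [set` s] `<=` atoms mu ->
  (forall i, measurable (F i)) -> (forall i, F i `<=` Omega) ->
  (forall i j, i != j -> F i `&` F j = set0) ->
  \sum_(i < k) `| mu (F i) | <=
  TV (Omega `\` atoms mu) + nu (atoms mu `\` [set` s]) +
  \sum_(w <- s) TV [set w].
Proof.
move=> us sA mF FO dF.
set A := atoms mu; set S := [set` s].
have mA : measurable A := atoms_meas.
have mS : measurable S := meas_seq s.
have dsub (G : 'I_k -> set T) : (forall i, G i `<=` F i) ->
    forall i j, i != j -> G i `&` G j = set0.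
  move=> GF i j ij; rewrite -subset0 => x [Gi Gj].
  have : (F i `&` F j) x by split; [apply: GF Gi | apply: GF Gj].
  by rewrite dF.
have dec i : mu (F i) = mu (F i `\` A) + mu (F i `&` (A `\` S)) +
    \sum_(w <- s) mu (F i `&` [set w]).
  rewrite -charge_seq //.
  have E : F i = (F i `\` A) `|` ((F i `&` (A `\` S)) `|` (F i `&` S)).
    apply/seteqP; split => x.
      move=> Fx; have [Ax|nAx] := pselect (A x); last by left.
      by have [Sx|nSx] := pselect (S x); right; [right|left].
    by case => [[]|[[]|[]]].
  rewrite {1}E chargeU //; last 3 first.
  - exact: measurableD.
  - by apply: measurableU; apply: measurableI => //; exact: measurableD.
  - rewrite -subset0 => x [[_ nAx] [[_ [Ax _]]|[_ Sx]]] //.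
    by apply: nAx; apply: sA.
  rewrite chargeU ?addeA //.
  - by apply: measurableI => //; exact: measurableD.
  - exact: measurableI.
  - by rewrite -subset0 => x [[_ [_ nSx]] [_ Sx]].
have step i : `| mu (F i) | <= `| mu (F i `\` A) | + nu (F i `&` (A `\` S)) +
    \sum_(w <- s) `| mu (F i `&` [set w]) |.
  rewrite dec; apply: le_trans; first exact: lee_abs_add.
  apply: leeD; last exact: lee_abs_sum.
  apply: le_trans; first exact: lee_abs_add.
  apply: leeD2l; apply: abse_charge_variation.
  by apply: measurableI => //; exact: measurableD.
apply: le_trans; first by apply: lee_sum => i _; exact: step i.
rewrite big_split big_split /=.
apply: leeD; first apply: leeD.
- apply: TV_ub.
  + by move=> i; exact: measurableD.
  + by move=> i x [Fx nAx]; split => //; apply: FO Fx.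
  + by apply: dsub => i x [].
- apply: nu_sum_le.
  + exact: measurableD.
  + by move=> i; apply: measurableI => //; exact: measurableD.
  + by move=> i x [].
  + by apply: dsub => i x [].
- rewrite exchange_big /=; apply: lee_sum => w _.
  apply: TV_ub.
  + by move=> i; apply: measurableI => //; exact: meas1.
  + by move=> i x [].
  + by apply: dsub => i x [].
Qed.

Lemma lower_bound (Omega : set T) (phi dphi : R -> R) :
  condA1 phi dphi ->
  (phi (fine (TV Omega)))%:E <= Phi phi Omega mu.
Proof.
move=> hA1; rewrite /Phi.
set a := TV (Omega `\` atoms mu).
set E := esum _ _.
have afin : a \is a fin_num := TV_fin _.
have E0 : 0 <= E.
  apply: esum_ge0 => w _; rewrite lee_fin; apply: (@phi_ge0 _ phi dphi hA1).
  by apply: fine_ge0; exact: TV_ge0.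
have [Efin|Enfin] := boolP (E \is a fin_num); last first.
  have -> : E = +oo.
    by apply/eqP; rewrite eq_le leey /= leNgt -ge0_fin_numE.
  by rewrite -(fineK afin) addey // leey.
rewrite -(fineK afin) -(fineK Efin) -EFinD lee_fin.
set c := (fine a + fine E)%R.
have c0 : (0 <= c)%R by apply: addr_ge0; apply: fine_ge0 => //; exact: TV_ge0.
have claim1 k (F : 'I_k -> set T) : (forall i, measurable (F i)) ->
    (forall i, F i `<=` Omega) -> (forall i j, i != j -> F i `&` F j = set0) ->
    (phi (fine (\sum_(i < k) `| mu (F i) |)) <= c)%R.
  move=> mF FO dF; apply/ler_addgt0Pr => e e0.
  have [m hm] := eps_Sm e e0.
  have [s0 s0E] := (finite_seqP _).1 (Sm_fin m).
  have us : uniq (undup s0) := undup_uniq s0.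
  have sE : [set` undup s0] = Sm m.
    by rewrite s0E; apply/seteqP; split => x /=; rewrite mem_undup.
  have sA : [set` undup s0] `<=` atoms mu by rewrite sE; exact: Sm_sub.
  have hb := fam_bound Omega (undup s0) k F us sA mF FO dF.
  rewrite sE in hb.
  have nufin : nu (atoms mu `\` Sm m) \is a fin_num.
    by apply: fin_num_measure; apply: measurableD;
      [exact: atoms_meas | exact: Sm_meas].
  move: hb.
  under [X in _ <= _ + X]eq_bigr do rewrite -[TV _](fineK (TV_fin _)).
  rewrite -/a sumEFin -(fineK (fam_fin k F mF)) -(fineK afin) -(fineK nufin).
  rewrite -!EFinD lee_fin => hb.
  have x0 : (0 <= fine (\sum_(i < k) `| mu (F i) |))%R.
    by apply: fine_ge0; apply: sume_ge0 => i _; exact: abse_ge0.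
  apply: le_trans; first exact: (@phi_mono _ phi dphi hA1 _ _ x0 hb).
  apply: le_trans; first apply: (@phi_sum _ phi dphi hA1).
  - by apply: addr_ge0; apply: fine_ge0; [exact: TV_ge0 | exact: measure_ge0].
  - by move=> w; apply: fine_ge0; exact: TV_ge0.
  have hE : (\sum_(w <- undup s0) phi (fine (TV [set w])) <= fine E)%R.
    rewrite -lee_fin (fineK Efin) -sumEFin fsbig_seq //.
    apply: ereal_sup_ubound; exists [set` undup s0] => //; split => //.
    by apply/finite_seqP; exists (undup s0).
  rewrite /c; lra.
have TOfin := TV_fin Omega.
set T0 := fine (TV Omega).
have T0ge : (0 <= T0)%R by apply: fine_ge0; exact: TV_ge0.
have [->|T0n0] := eqVneq T0 0%R; first by rewrite (@phi0 _ phi dphi hA1).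
have T0pos : (0 < T0)%R by rewrite lt_def T0n0.
rewrite leNgt; apply/negP => hc.
have := cvgr_gt _ (@phi_cont _ phi dphi hA1 T0 T0pos) c hc.
move=> hnear; have [d d0 Hd] := (nbhs_ballP _ _).1 (hnear _).
have : (T0 - d)%:E < TV Omega.
  by rewrite -(fineK TOfin) lte_fin -/T0; move: d0 => /= d0; lra.
move=> /ereal_sup_gt [_ [k [F [mF FO dF ->]]] hx].
have xle := TV_ub k F Omega mF FO dF.
move: hx xle; rewrite -(fineK (fam_fin k F mF)) -[X in _ <= X](fineK TOfin).
rewrite !lte_fin !lee_fin -/T0 => hx xle.
have := claim1 k F mF FO dF; apply/negP; rewrite -ltNge.
apply: Hd; rewrite -ball_normE /ball_ /= ltr_norml; apply/andP; split; lra.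
Qed.

End tv.

Theorem lemmaA2 (R : realType) (n : nat) (Omega : set 'rV[R]_n)
  (phi dphi : R -> R)
  (hOmega : compact Omega)
  (hA1 : condA1 phi dphi)
  (mu : {charge set borelRn R n -> \bar R})
  (hmu : forall A : set (borelRn R n), measurable A -> mu (A `\` Omega) = 0%E) :
  ((phi (fine (TVnorm Omega mu)))%:E <= Phi phi Omega mu)%E /\
  (Phi phi Omega mu <= TVnorm Omega mu)%E.
Proof.
have [P [N nuPN]] := Hahn_decomposition mu.
have AO : atoms mu `<=` Omega.
  move=> w; rewrite /atoms /= => h; apply: contrapT => nOw.
  have := hmu [set w] (meas1 w).
  have -> : [set w] `\` Omega = [set w].
    by apply/seteqP; split => x; [case | move=> ->; split].
  by move=> h0; move: h; rewrite h0 eqxx.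
rewrite /TVnorm; split.
- exact: (@lower_bound _ _ mu P N nuPN Omega phi dphi hA1).
- exact: (@upper_bound _ _ mu P N nuPN Omega phi dphi hA1 AO).
Qed.
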